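(* For every Büchi automaton $A$ over the alphabet $2^{AP}$, $\mathrm{supp}(A)$ is an LTL theory, i.e., $\mathrm{Cn}_{LTL}(\mathrm{supp}(A))=\mathrm{supp}(A)$.
   Context: Fix a finite nonempty $AP$. LTL formulae $\varphi::=\bot\mid p\mid\neg\varphi\mid\varphi\lor\varphi\mid X\varphi\mid\varphi U\varphi$ with the standard trace semantics over $(2^{AP})^\omega$. Kripke structure $M=(S,I,T,\lambda)$: finite $S$, nonempty $I\subseteq S$, left-total $T$, $\lambda:S\to2^{AP}$; traces $\lambda(s_0)\lambda(s_1)\dots$ along paths from $I$; $M\models\varphi$ iff all traces of $M$ satisfy $\varphi$. $\mathrm{Cn}_{LTL}(X)$ = formulae satisfied by every Kripke structure satisfying all of $X$. Büchi automaton $A=(Q,\Sigma,\Delta,Q_0,R)$ accepts an infinite word iff there is a run from an initial state along $\Delta$ visiting $R$ infinitely often; $\mathcal{L}(A)$ its language. $\mathrm{supp}(A):=\{\varphi\mid\pi\models\varphi\ \forall\pi\in\mathcal{L}(A)\}$. *)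

(* Defs.v *)
From mathcomp Require Import all_boot.
Set Implicit Arguments. Unset Strict Implicit. Unset Printing Implicit Defensive.

Section LTL.
Variable AP : finType.

Definition word := nat -> {set AP}.

Inductive ltl : Type :=
| LBot : ltl
| LAtom : AP -> ltl
| LNeg : ltl -> ltl
| LOr : ltl -> ltl -> ltl
| LNext : ltl -> ltl
| LUntil : ltl -> ltl -> ltl.

Fixpoint sat_at (pi : word) (i : nat) (phi : ltl) : Prop :=
  match phi with
  | LBot => False
  | LAtom p => p \in pi i
  | LNeg f => ~ sat_at pi i f
  | LOr f g => sat_at pi i f \/ sat_at pi i g
  | LNext f => sat_at pi i.+1 f
  | LUntil f g => exists k, i <= k /\ sat_at pi k g /\
                    forall j, i <= j -> j < k -> sat_at pi j f
  end.

Definition models (pi : word) (phi : ltl) : Prop := sat_at pi 0 phi.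

Record kripke : Type := Kripke {
  kS : finType;
  kI : {set kS};
  kT : rel kS;
  kL : kS -> {set AP};
  kI_nonempty : kI != set0;
  kT_total : forall s : kS, exists s' : kS, kT s s'
}.

Definition is_trace (M : kripke) (pi : word) : Prop :=
  exists rho : nat -> kS M,
    rho 0 \in @kI M /\ (forall n, @kT M (rho n) (rho n.+1)) /\
    (forall n, pi n = @kL M (rho n)).

Definition kmodels (M : kripke) (phi : ltl) : Prop :=
  forall pi, is_trace M pi -> models pi phi.

Definition CnLTL (X : ltl -> Prop) : ltl -> Prop :=
  fun phi => forall M : kripke, (forall psi, X psi -> kmodels M psi) -> kmodels M phi.

Record buchi : Type := Buchi {
  bQ : finType;
  bDelta : bQ -> {set AP} -> bQ -> bool;
  bQ0 : {set bQ};
  bR : {set bQ}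
}.

Definition accepts (A : buchi) (pi : word) : Prop :=
  exists r : nat -> bQ A,
    r 0 \in @bQ0 A /\ (forall n, @bDelta A (r n) (pi n) (r n.+1)) /\
    (forall n, exists m, n <= m /\ r m \in @bR A).

Definition supp (A : buchi) : ltl -> Prop :=
  fun phi => forall pi, accepts A pi -> models pi phi.

End LTL.

(* Main.v *)
Require Import Defs.
From mathcomp Require Import all_boot.
From mathcomp Require Import zify.
From Stdlib Require Import Classical ClassicalEpsilon FunctionalExtensionality.
From Stdlib Require List.
Set Implicit Arguments. Unset Strict Implicit. Unset Printing Implicit Defensive.

Fixpoint subs AP (phi : ltl AP) : seq (ltl AP) :=
  phi :: match phi with
         | LNeg a | LNext a => subs a
         | LOr a b | LUntil a b => subs a ++ subs b
         | _ => nil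
         end.

Lemma In_self AP (phi : ltl AP) : List.In phi (subs phi).
Proof. by case: phi => *; left. Qed.

Fixpoint lf (i j n : nat) : nat :=
  match n with 0 => 0 | n'.+1 => if (lf i j n').+1 < j then (lf i j n').+1 else i end.

Lemma lf_lt i j n : i < j -> lf i j n < j.
Proof. move=> h; elim: n => [|n IH] /=; first lia. by case: ifP. Qed.

Lemma lf_add i j k t : lf i j k + t < j -> lf i j (k + t) = lf i j k + t.
Proof.
elim: t => [|t IH] h; first by rewrite !addn0.
rewrite addnS /= IH; last lia.
by rewrite ifT; [lia|lia].
Qed.

Lemma lf_wrap i j k : i < j -> lf i j (k + (j - lf i j k)) = i.
Proof.
move=> hij; have hl := lf_lt k hij.
have -> : j - lf i j k = (j - lf i j k).-1.+1 by lia.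
rewrite addnS /= lf_add; last lia.
rewrite ifF //; lia.
Qed.

Lemma key AP (pi : word AP) i j (hij : i < j) psi :
 (forall chi, List.In chi (subs psi) -> (sat_at pi i chi <-> sat_at pi j chi)) ->
 (forall a b, List.In (LUntil a b) (subs psi) -> sat_at pi i (LUntil a b) ->
    exists m, m < j /\ i <= m /\ sat_at pi m b /\ forall x, i <= x -> x < m -> sat_at pi x a) ->
 forall k, sat_at (fun n => pi (lf i j n)) k psi <-> sat_at pi (lf i j k) psi.
Proof.
elim: psi => [|p|a IHa|a IHa b IHb|a IHa|a IHa b IHb] Hag Hw k /=; try done.
- have IHa' := IHa (fun c h => Hag c (or_intror h)) (fun c d h => Hw c d (or_intror h)).
  by rewrite IHa'.
- have IHa' := IHa (fun c h => Hag c (or_intror (List.in_or_app _ _ _ (or_introl h))))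
                   (fun c d h => Hw c d (or_intror (List.in_or_app _ _ _ (or_introl h)))).
  have IHb' := IHb (fun c h => Hag c (or_intror (List.in_or_app _ _ _ (or_intror h))))
                   (fun c d h => Hw c d (or_intror (List.in_or_app _ _ _ (or_intror h)))).
  by rewrite IHa' IHb'.
- have IHa' := IHa (fun c h => Hag c (or_intror h)) (fun c d h => Hw c d (or_intror h)).
  rewrite IHa' /=. case: ifPn => h //.
  have hl := lf_lt k hij.
  have -> : (lf i j k).+1 = j by move: h; rewrite -leqNgt; lia.
  apply: Hag; right; exact: In_self.
- have IHa' := IHa (fun c h => Hag c (or_intror (List.in_or_app _ _ _ (or_introl h))))
                   (fun c d h => Hw c d (or_intror (List.in_or_app _ _ _ (or_introl h)))).
  have IHb' := IHb (fun c h => Hag c (or_intror (List.in_or_app _ _ _ (or_intror h))))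
                   (fun c d h => Hw c d (or_intror (List.in_or_app _ _ _ (or_intror h)))).
  have HU : sat_at pi i (LUntil a b) <-> sat_at pi j (LUntil a b) by apply: Hag; left.
  have step : forall x, sat_at pi x a -> sat_at pi x.+1 (LUntil a b) -> sat_at pi x (LUntil a b).
    move=> x Ha [m [Hm [Hb Hf]]]; exists m; split; first lia; split => // y Hy Hym.
    have [->|ne] := eqVneq y x; first done. apply: Hf; lia.
  have transfer : forall x, sat_at pi (lf i j x.+1) (LUntil a b) <-> sat_at pi (lf i j x).+1 (LUntil a b).
    move=> x /=; case: ifPn => h //.
    have hl := lf_lt x hij.
    have -> : (lf i j x).+1 = j by move: h; rewrite -leqNgt; lia.
    exact: HU.
  split.
  + move=> [m [Hkm [Hb Ha]]].
    have gen : forall d k0, sat_at (fun n => pi (lf i j n)) (k0 + d) b ->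
        (forall x, k0 <= x -> x < k0 + d -> sat_at (fun n => pi (lf i j n)) x a) ->
        sat_at pi (lf i j k0) (LUntil a b).
      elim=> [|d IH] k0 Hb0 Ha0.
        exists (lf i j k0); split => //; split; first by rewrite addn0 IHb' in Hb0.
        move=> x h1 h2; lia.
      apply: step; first by apply/IHa'; apply: Ha0; lia.
      apply/transfer; apply: IH; first by rewrite addSnnS.
      move=> x h1 h2; apply: Ha0; lia.
    apply: (gen (m - k)); first by rewrite subnKC.
    move=> x h1 h2; apply: Ha; lia.
  + move=> [m [Hkm [Hb Ha]]].
    have hl := lf_lt k hij.
    case: (ltnP m j) => Hmj.
    * have E : lf i j (k + (m - lf i j k)) = m by rewrite lf_add; lia.
      exists (k + (m - lf i j k)); split; first lia; split; first by rewrite IHb' E.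
      move=> x h1 h2; apply/IHa'.
      have -> : x = k + (x - k) by lia.
      rewrite lf_add; last lia. apply: Ha; lia.
    * have Uj : sat_at pi j (LUntil a b).
        exists m; split => //; split => // x h1 h2; apply: Ha; lia.
      have Ui : sat_at pi i (LUntil a b) by apply/HU.
      have [m2 [Hm2j [Him2 [Hb2 Ha2]]]] := Hw a b (or_introl erefl) Ui.
      have Ek : lf i j (k + (j - lf i j k)) = i by exact: lf_wrap.
      set k' := k + (j - lf i j k) in Ek *.
      have E2 : lf i j (k' + (m2 - i)) = m2 by rewrite lf_add Ek; lia.
      exists (k' + (m2 - i)); split; first lia; split; first by rewrite IHb' E2.
      move=> x h1 h2; apply/IHa'.
      case: (ltnP x k') => Hxk.
      -- have -> : x = k + (x - k) by lia.
         rewrite lf_add; last lia. apply: Ha; lia.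
      -- have -> : x = k' + (x - k') by lia.
         rewrite lf_add Ek; last lia. apply: Ha2; lia.
Qed.

Lemma pigeon (T : finType) (g : nat -> T) (P : nat -> Prop) :
  (forall N, exists m, N <= m /\ P m) ->
  exists c, forall N, exists m, N <= m /\ P m /\ g m = c.
Proof.
move=> H; apply: NNPP => Hn.
have Hb : forall c, exists N, forall m, N <= m -> P m -> g m <> c.
  move=> c; apply: NNPP => Hc; apply: Hn; exists c => N.
  apply: NNPP => Hm; apply: Hc; exists N => m h1 h2 h3; apply: Hm; by exists m.
have : forall s : seq T, exists N, forall c, c \in s -> forall m, N <= m -> P m -> g m <> c.
  elim=> [|c s [N HN]]; first by exists 0.
  have [Nc HNc] := Hb c.
  exists (maxn N Nc) => c'; rewrite in_cons => /orP [/eqP -> | hs] m hm.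
    apply: HNc; exact: leq_trans (leq_maxr _ _) hm.
  apply: HN => //; exact: leq_trans (leq_maxl _ _) hm.
move=> /(_ (enum T)) [N HN]. have [m [hm hp]] := H N.
by apply: (HN (g m) _ m hm hp erefl); rewrite mem_enum.
Qed.

Lemma bound_wit AP (pi : word AP) i (l : seq (ltl AP)) : exists N,
  forall a b, List.In (LUntil a b) l -> sat_at pi i (LUntil a b) ->
    exists m, m < N /\ i <= m /\ sat_at pi m b /\ forall x, i <= x -> x < m -> sat_at pi x a.
Proof.
elim: l => [|chi l [N HN]]; first by exists 0.
case: (classic (exists a0 b0 m0, chi = LUntil a0 b0 /\ i <= m0 /\ sat_at pi m0 b0 /\
                  forall x, i <= x -> x < m0 -> sat_at pi x a0)).
- move=> [a0 [b0 [m0 [E [h1 [h2 h3]]]]]].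
  exists (maxn N m0.+1) => a b [E'|hin] hs.
    subst chi; case: E' => <- <-. exists m0; split; [lia|done].
  have [m [hm rest]] := HN a b hin hs. exists m; split; [lia|done].
- move=> hno; exists N => a b [E'|hin] hs; last exact: HN.
  exfalso; apply: hno; subst chi. move: hs => [m [h1 [h2 h3]]].
  by exists a, b, m.
Qed.

Definition asb (P : Prop) : bool := if excluded_middle_informative P then true else false.

Lemma asb_iff (P Q : Prop) : asb P = asb Q -> (P <-> Q).
Proof.
rewrite /asb; case: excluded_middle_informative; case: excluded_middle_informative => //.
Qed.

Lemma In_nth (T : Type) (d x : T) (l : seq T) :
  List.In x l -> exists k, k < size l /\ nth d l k = x.
Proof.
elim: l => //= y l IH [->|h]; first by exists 0.
have [k [hk e]] := IH h; by exists k.+1.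
Qed.

Lemma next_lt i j x : i < j -> (if x.+1 < j then x.+1 else i) < j.
Proof. by move=> h; case: ifP. Qed.

Theorem mainTheorem13 (AP : finType) (hAP : 0 < #|AP|) (A : buchi AP) :
  forall phi : ltl AP, CnLTL (supp A) phi <-> supp A phi.
Proof.
move=> phi; split; last first.
  by move=> H M HM; apply: HM.
move=> Hcn pi [r [Hr0 [Hrd Hrinf]]]. apply: NNPP => Hnot.
pose sl := subs phi. pose n := size sl.
pose typ k : n.-tuple bool := [tuple asb (sat_at pi k (nth (LBot AP) sl x)) | x < n].
have [c Hc] := pigeon (fun k => (r k, typ k)) Hrinf.
have [i [_ [HRi Hci]]] := Hc 0.
have [N HN] := bound_wit pi i sl.
have [j [Hj [HRj Hcj]]] := Hc (maxn N i.+1).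
have hij : i < j by lia.
have hNj : N <= j by lia.
have Hcc : (r i, typ i) = (r j, typ j) by rewrite Hci Hcj.
have Hr : r i = r j := congr1 fst Hcc.
have Htyp : typ i = typ j := congr1 snd Hcc.
have Hag : forall chi, List.In chi sl -> (sat_at pi i chi <-> sat_at pi j chi).
  move=> chi hchi. have [x [hx hnth]] := In_nth (LBot AP) hchi.
  have := congr1 (fun t => tnth t (Ordinal hx)) Htyp.
  rewrite !tnth_mktuple /= hnth. exact: asb_iff.
have Hw : forall a b, List.In (LUntil a b) sl -> sat_at pi i (LUntil a b) ->
    exists m, m < j /\ i <= m /\ sat_at pi m b /\ forall x, i <= x -> x < m -> sat_at pi x a.
  move=> a b h1 h2; have [m [hm rest]] := HN a b h1 h2; exists m; split; [lia|done].
have K := key hij Hag Hw.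
have j0 : 0 < j by lia.
have ne : [set x : 'I_j | val x == 0] != set0.
  by apply/set0Pn; exists (Ordinal j0); rewrite inE.
have tot : forall s : 'I_j, exists s' : 'I_j,
    val s' == (if (val s).+1 < j then (val s).+1 else i).
  by move=> s; exists (Ordinal (next_lt (val s) hij)).
pose M := @Kripke AP ('I_j) [set x : 'I_j | val x == 0]
   (fun s s' => val s' == (if (val s).+1 < j then (val s).+1 else i))
   (fun s => pi (val s)) ne tot.
have Hacc : accepts A (fun m => pi (lf i j m)).
  exists (fun m => r (lf i j m)); split => //; split.
    move=> m /=; case: ifPn => h; first exact: Hrd.
    have hl := lf_lt m hij.
    have e' : (lf i j m).+1 = j by move: h; rewrite -leqNgt; lia.
    by have := Hrd (lf i j m); rewrite e' -Hr.
  move=> N0; exists (N0 + (j - lf i j N0)); split; first lia.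
  by rewrite lf_wrap.
have HM : forall psi, supp A psi -> kmodels M psi.
  move=> psi Hpsi pi' [rho [h0 [hT hL]]].
  have e : forall m, val (rho m) = lf i j m.
    elim=> [|m IH]; first by move: h0; rewrite inE => /eqP.
    by move: (hT m) => /= /eqP ->; rewrite IH.
  have -> : pi' = (fun m => pi (lf i j m)).
    by apply: functional_extensionality => m; rewrite hL /= e.
  exact: Hpsi.
have Htr : is_trace M (fun m => pi (lf i j m)).
  exists (fun m => Ordinal (lf_lt m hij)); split; first by rewrite inE.
  by split => // m /=.
have := Hcn M HM _ Htr.
rewrite /models K /=. exact: Hnot.
Qed.
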